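(* Let $M=\Pi\backslash\mathrm{Sol}_1^4$ be an infra-$\mathrm{Sol}_1^4$ manifold with $\Pi\subset\mathrm{Sol}_1^4\rtimes D_4$, and let $s$ be its translational involution. Then either $s$ acts freely on $M$, or every component of the fixed point set of $s$ is $2$-dimensional.
   Context: $\mathrm{Sol}_1^4$ is the group of real matrices $\begin{pmatrix}1&e^ux&z\\0&e^u&y\\0&0&1\end{pmatrix}$; its center is $\{x=y=u=0\}\cong\mathbb{R}$. $D_4\subset\mathrm{Aut}(\mathrm{Sol}_1^4)$ is the group of $8$ automorphisms given, for $A=\begin{pmatrix}a&b\\c&d\end{pmatrix}\in\{\begin{pmatrix}\pm1&0\\0&\pm1\end{pmatrix},\begin{pmatrix}0&\pm1\\\pm1&0\end{pmatrix}\}$, by $\begin{pmatrix}1&e^ux&z\\0&e^u&y\\0&0&1\end{pmatrix}\mapsto\begin{pmatrix}1&e^{\bar Au}(ax+by)&\tfrac12(acx^2+2bcxy+bdy^2+2(ad-bc)z)\\0&e^{\bar Au}&cx+dy\\0&0&1\end{pmatrix}$, $\bar A=+1$ for diagonal $A$ and $-1$ otherwise. An infra-$\mathrm{Sol}_1^4$ manifold is $M=\Pi\backslash\mathrm{Sol}_1^4$ with $\Pi$ a discrete, cocompact, torsion-free subgroup of $\mathrm{Sol}_1^4\rtimes D_4$ acting by $(a,A)\cdot g=a\,A(g)$. The intersection of $\Pi$ with the center is infinite cyclic, generated by the central element with $z=1/q$ ($q>0$). Let $s$ be the central element with $z=1/(2q)$; for every $\alpha\in\Pi$ one has $s\alpha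 s^{-1}=\alpha$ or $s\alpha s^{-1}=s^2\alpha$, so $s$ normalizes $\Pi$ and its action on $\mathrm{Sol}_1^4$ descends to an involution of $M$, called the translational involution. *)

(* Defs.v *)
From HB Require Import structures.
From mathcomp Require Import all_boot all_order all_algebra.
From mathcomp Require Import all_classical all_reals all_analysis.
Set Implicit Arguments. Unset Strict Implicit. Unset Printing Implicit Defensive.
Import Order.TTheory GRing.Theory Num.Theory.
Import numFieldNormedType.Exports.
Local Open Scope ring_scope.
Local Open Scope classical_set_scope.

Section InfraSol.
Variable R : realType.

(* An element of Sol_1^4 is encoded by its coordinates ((x, y), z), u),
   standing for the matrix
     [ 1  e^u x  z ]
     [ 0  e^u    y ]
     [ 0  0      1 ].                                                     *)
Definition sol := (R * R * R * R)%type.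
Definition solx (g : sol) : R := g.1.1.1.
Definition soly (g : sol) : R := g.1.1.2.
Definition solz (g : sol) : R := g.1.2.
Definition solu (g : sol) : R := g.2.
Definition mksol (x y z u : R) : sol := (x, y, z, u).

Definition solmx (g : sol) : 'M[R]_3 :=
  \matrix_(i < 3, j < 3)
    if (i == 0%N :> nat) then
      (if (j == 0%N :> nat) then 1 else if (j == 1%N :> nat)
       then expR (solu g) * solx g else solz g)
    else if (i == 1%N :> nat) then
      (if (j == 0%N :> nat) then 0 else if (j == 1%N :> nat)
       then expR (solu g) else soly g)
    else (if (j == 2%N :> nat) then 1 else 0).

(* Group law of Sol_1^4 = matrix multiplication, written out in coordinates:
   solmx (solmul g h) = solmx g *m solmx h. *)
Definition solmul (g h : sol) : sol :=
  mksol (solx g + expR (- solu g) * solx h)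
        (soly g + expR (solu g) * soly h)
        (solz g + solz h + expR (solu g) * solx g * soly h)
        (solu g + solu h).

Definition sol1 : sol := mksol 0 0 0 0.

Definition mx2 (a b c d : R) : 'M[R]_2 :=
  \matrix_(i < 2, j < 2)
    if (i == 0%N :> nat) then (if (j == 0%N :> nat) then a else b)
    else (if (j == 0%N :> nat) then c else d).

Definition is_D4 (A : 'M[R]_2) : Prop :=
  exists e1 e2 : R, (e1 = 1 \/ e1 = -1) /\ (e2 = 1 \/ e2 = -1) /\
    (A = mx2 e1 0 0 e2 \/ A = mx2 0 e1 e2 0).

Definition Abar (A : 'M[R]_2) : R := if A 0 1 == 0 then 1 else -1.

Definition d4act (A : 'M[R]_2) (g : sol) : sol :=
  let a := A 0 0 in let b := A 0 1 in let c := A 1 0 in let d := A 1 1 in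
  let x := solx g in let y := soly g in let z := solz g in let u := solu g in
  mksol (a * x + b * y) (c * x + d * y)
        (2^-1 * (a * c * x ^+ 2 + 2 * b * c * x * y + b * d * y ^+ 2
                 + 2 * (a * d - b * c) * z))
        (Abar A * u).

Definition elem := (sol * 'M[R]_2)%type.
Definition act (al : elem) (g : sol) : sol := solmul al.1 (d4act al.2 g).
Definition emul (al be : elem) : elem :=
  (solmul al.1 (d4act al.2 be.1), al.2 *m be.2).
Definition eid : elem := (sol1, 1%:M).
Definition epow (al : elem) (n : nat) : elem := iter n (emul al) eid.

Definition is_subgroup (Pi : set elem) : Prop :=
  (forall al, Pi al -> is_D4 al.2) /\
  Pi eid /\
  (forall al be, Pi al -> Pi be -> Pi (emul al be)) /\
  (forall al, Pi al -> exists be, Pi be /\ emul al be = eid).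

(* discrete in Sol x| D_4 (D_4 carrying the discrete topology) *)
Definition is_discrete (Pi : set elem) : Prop :=
  forall al, Pi al -> exists U : set sol, open U /\ U al.1 /\
    forall be, Pi be -> be.2 = al.2 -> U be.1 -> be = al.

Definition is_cocompact (Pi : set elem) : Prop :=
  exists K : set sol, compact K /\
    forall g, exists al k, Pi al /\ K k /\ g = act al k.

Definition is_torsion_free (Pi : set elem) : Prop :=
  forall al n, Pi al -> (0 < n)%N -> epow al n = eid -> al = eid.

Definition zc (t : R) : sol := mksol 0 0 t 0.

(* Lift to Sol_1^4 of the fixed point set of the involution [g] |-> [s g]
   of M = Pi\Sol_1^4. *)
Definition lifted_fix (Pi : set elem) (s : sol) : set sol :=
  [set g | exists al, Pi al /\ solmul s g = act al g].

Definition is_2manifold (F : set sol) : Prop :=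
  forall p, F p -> exists U : set sol, open U /\ U p /\
    exists (f : (R * R)%type -> sol) (h : sol -> (R * R)%type),
      continuous f /\ {within U `&` F, continuous h} /\
      (forall v, (U `&` F) (f v)) /\ (forall v, h (f v) = v) /\
      (forall g, (U `&` F) g -> f (h g) = g).

End InfraSol.

(* Main.v *)
Require Import Defs.
From HB Require Import structures.
From mathcomp Require Import all_boot all_order all_algebra.
From mathcomp Require Import all_classical all_reals all_analysis.
From mathcomp Require Import ring lra.
Import Order.TTheory GRing.Theory Num.Theory.
Import numFieldNormedType.Exports.
Local Open Scope ring_scope.
Local Open Scope classical_set_scope.

Section S.
Variable R : realType.
Implicit Types (a b c d : R).

Lemma mx2E a b c d :
  [/\ mx2 a b c d 0 0 = a, mx2 a b c d 0 1 = b, mx2 a b c d 1 0 = c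
    & mx2 a b c d 1 1 = d].
Proof. by rewrite /mx2 !mxE. Qed.

Lemma mx2_eq a b c d a' b' c' d' : mx2 a b c d = mx2 a' b' c' d' ->
  [/\ a = a', b = b', c = c' & d = d'].
Proof.
move=> H; have [h1 h2 h3 h4] := mx2E a b c d; have [k1 k2 k3 k4] := mx2E a' b' c' d'.
split; [rewrite -h1 -k1|rewrite -h2 -k2|rewrite -h3 -k3|rewrite -h4 -k4]; by rewrite H.
Qed.

Lemma mx2_congr a b c d a' b' c' d' : a = a' -> b = b' -> c = c' -> d = d' ->
  mx2 a b c d = mx2 a' b' c' d'.
Proof. by move=> -> -> -> ->. Qed.

Lemma mx2_mul a b c d a' b' c' d' :
  mx2 a b c d *m mx2 a' b' c' d' =
  mx2 (a*a' + b*c') (a*b' + b*d') (c*a' + d*c') (c*b' + d*d').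
Proof.
apply/matrixP => i j; rewrite !mxE !big_ord_recr big_ord0 /= !mxE add0r.
by case: i => [[|[|]]] //= _; case: j => [[|[|]]] //= _.
Qed.

Lemma mx2_1 : (1%:M : 'M[R]_2) = mx2 1 0 0 1.
Proof.
apply/matrixP => -[[|[|[|i]]] Hi] [[|[|[|j]]] Hj]; by rewrite !mxE.
Qed.

Lemma emul_eid (al : elem R) : emul al (eid R) = al.
Proof.
case: al => [[[[a1 a2] a3] a4] A]; rewrite /emul /eid /= mulmx1.
rewrite /solmul /d4act /sol1 /mksol /solx /soly /solz /solu /=.
by congr (_,_,_,_,_); ring.
Qed.

Lemma epow2 (al : elem R) : epow al 2 = emul al al.
Proof. by rewrite /epow /= emul_eid. Qed.


Lemma mx2_00 a b c d : mx2 a b c d 0 0 = a. Proof. by rewrite /mx2 !mxE. Qed.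
Lemma mx2_01 a b c d : mx2 a b c d 0 1 = b. Proof. by rewrite /mx2 !mxE. Qed.
Lemma mx2_10 a b c d : mx2 a b c d 1 0 = c. Proof. by rewrite /mx2 !mxE. Qed.
Lemma mx2_11 a b c d : mx2 a b c d 1 1 = d. Proof. by rewrite /mx2 !mxE. Qed.
Lemma Abar_d a c d : Abar (mx2 a 0 c d) = 1.
Proof. by rewrite /Abar mx2_01 eqxx. Qed.
Lemma Abar_a a b c d : b != 0 -> Abar (mx2 a b c d) = -1.
Proof. by rewrite /Abar mx2_01 => /negbTE ->. Qed.

Definition mI : 'M[R]_2 := mx2 (-1) 0 0 (-1).
Definition Qel (t x y : R) : elem R := (mksol (2*x) (2*y) (t + 2*x*y) 0, mI).

Lemma neg_sq (b : sol R) : solu b = 0 -> 2 * solz b = solx b * soly b ->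
  emul (b, mI) (b, mI) = eid R.
Proof.
case: b => [[[b1 b2] b3] b4]; rewrite /solu /solz /solx /soly /= => -> H.
rewrite /emul /eid /mI /= mx2_mul mx2_1.
have -> : mx2 ((-1) * (-1) + 0 * 0) ((-1) * 0 + 0 * (-1)) (0 * (-1) + (-1) * 0) (0 * 0 + (-1) * (-1)) = mx2 1 0 0 1 :> 'M[R]_2 by congr mx2; ring.
rewrite /solmul /d4act /sol1 /mksol /solx /soly /solz /solu /= !mx2_00 !mx2_01 !mx2_10 !mx2_11 Abar_d.
congr (_,_,_,_,_); rewrite ?oppr0 ?expR0; try ring.

have -> : b3 = (b1 * b2) / 2 by rewrite -H; field.
by field.

Qed.

Lemma act_Q t (g : sol R) : solmul (zc t) g = act (Qel t (solx g) (soly g)) g.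
Proof.
case: g => [[[x y] z] u].
rewrite /act /Qel /mI /zc /solmul /d4act /mksol /solx /soly /solz /solu /= !mx2_00 !mx2_01 !mx2_10 !mx2_11 Abar_d.
rewrite oppr0 expR0; congr (_,_,_,_); by field.
Qed.


Lemma tf_id (Pi : set (elem R)) (htf : is_torsion_free Pi) (al : elem R) :
  Pi al -> emul al al = eid R -> al.2 = 1%:M.
Proof. by move=> Pa H; have := htf al 2%N Pa erefl; rewrite epow2 => /(_ H) ->. Qed.

Ltac expand := rewrite /emul /eid /= mx2_mul mx2_1 /solmul /d4act /sol1 /mksol /solx /soly /solz /solu /= !mx2_00 !mx2_01 !mx2_10 !mx2_11 ?Abar_d ?Abar_a ?oppr_eq0 ?oner_eq0 //.

Ltac fin := congr (_,_,_,_,_); rewrite ?oppr0 ?expR0; try (by field); apply: mx2_congr; ring.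

Lemma solve_lin (a L R' c : R) : L = R' -> a - c = R' - L -> a = c.
Proof. by move=> -> h; apply/eqP; rewrite -subr_eq0 h subrr. Qed.

Lemma half_int (q : R) (k : int) : q != 0 -> 1 / (2 * q) = k%:~R / q -> False.
Proof.
move=> q0 hk.
have h : (2 * k)%:~R = 1 :> R.
  rewrite intrM.
  have -> : (k%:~R : R) = (k%:~R / q) * q by field.
  rewrite -hk; by field.
have : (2 * k)%:~R = 1%:~R :> R by rewrite h.
move/intr_inj => h2.
have : odd `|(2 * k)%R|%N by rewrite h2.
by rewrite abszM /= oddM.
Qed.

Lemma char (Pi : set (elem R)) (hsub : is_subgroup Pi) (htf : is_torsion_free Pi)
  (q : R) (hq : 0 < q)
  (hcenter : forall t : R, Pi (zc t, 1%:M) <-> exists k : int, t = k%:~R / q)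
  (g : sol R) : lifted_fix Pi (zc (1/(2*q))) g -> Pi (Qel (1/(2*q)) (solx g) (soly g)).
Proof.
move=> [al [Pal Heq]]; have D4 := hsub.1 al Pal.
have q0 : q != 0 by rewrite gt_eqF.
move: al Pal Heq D4 => [[[[a1 a2] a3] a4] A] Pal Heq /= [e1 [e2 [he1 [he2 hA]]]].
move: g Heq => [[[x y] z] u] Heq.
case: hA => hA; rewrite {A}hA in Pal Heq; last first.
{ have e10 : e1 != 0 by case: he1 => ->; rewrite ?oppr_eq0 oner_eq0.
  have ee : e1 * e1 = 1 by case: he1 => ->; ring.
  have [he|he] : e2 = e1 \/ e2 = - e1.
    by case: he1 => ->; case: he2 => ->; rewrite ?opprK; auto.
  all: move: Heq; rewrite /act /zc /solmul /d4act /mksol /solx /soly /solz /solu /= !mx2_00 !mx2_01 !mx2_10 !mx2_11 (Abar_a _ _ _ _ e10) ?oppr0 ?expR0.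
  all: case => h1 h2 h3 h4; rewrite he in Pal h1 h2 h3; exfalso.
  + have ha1 : a1 = x - expR (- a4) * e1 * y.
      by apply: (solve_lin _ _ _ _ h1); ring.
    have ha2 : a2 = y - expR a4 * e1 * x.
      by apply: (solve_lin _ _ _ _ h2); ring.
    have E : emul (a1,a2,a3,a4, mx2 0 e1 e1 0) (a1,a2,a3,a4, mx2 0 e1 e1 0) = eid R.
      rewrite /emul /eid /= mx2_mul mx2_1 /solmul /d4act /sol1 /mksol /solx /soly /solz /solu /= !mx2_00 !mx2_01 !mx2_10 !mx2_11 (Abar_a _ _ _ _ e10).
    { rewrite ha1 ha2 expRN; case: he1 => ->.
      all: congr (_,_,_,_,_).
      all: first [ by ring | by field | by field; rewrite gt_eqF ?expR_gt0 | by apply: mx2_congr; ring ]. }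
    have := tf_id Pi htf _ Pal E; rewrite /= mx2_1 => /mx2_eq [h _ _ _]; lra.
  + have ha1 : a1 = x - expR (- a4) * e1 * y.
      by apply: (solve_lin _ _ _ _ h1); ring.
    have ha2 : a2 = y + expR a4 * e1 * x.
      by apply: (solve_lin _ _ _ _ h2); ring.
    have ha3 : a3 = 1 / (2 * q) + x * y + expR a4 * e1 * a1 * x.
      by apply: (solve_lin _ _ _ _ h3); case: he1 => ->; field.
    have Pm1 : Pi (zc (- (1 / q)), 1%:M).
      by apply/hcenter; exists (-1); field.
    have [_ [_ [hmul _]]] := hsub.
    have Pg := hmul _ _ Pm1 (hmul _ _ Pal Pal).
    set g2 := emul _ _ in Pg.
    have hg : g2 = (mksol (a1 + expR (- a4) * (e1 * a2)) (a2 - expR a4 * e1 * a1)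
                   (2 * a3 - a1 * a2 - expR a4 * e1 * a1 ^+ 2 - 1 / q) 0, mI).
    { rewrite /g2 /emul /eid /= !mx2_mul mx2_1 /mI /zc /solmul /d4act /sol1 /mksol /solx /soly /solz /solu /= !mx2_00 !mx2_01 !mx2_10 !mx2_11 (Abar_a _ _ _ _ e10) !Abar_d mx2_mul.
      case: he1 => ->.
      all: congr (_,_,_,_,_); rewrite ?oppr0 ?expR0.
      all: first [ by ring | by field | by field; rewrite gt_eqF ?expR_gt0 | by apply: mx2_congr; ring ]. }
    rewrite hg in Pg.
    set b := mksol _ _ _ _ in Pg.
    have E : emul (b, mI) (b, mI) = eid R.
    { apply: neg_sq; first by [].
      rewrite /b /solx /soly /solz /mksol /= ha3 ha1 ha2 expRN; case: he1 => ->.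
      all: first [ by field | by field; rewrite gt_eqF ?expR_gt0 ]. }
    have := tf_id Pi htf _ Pg E; rewrite /= /mI mx2_1 => /mx2_eq [h _ _ _]; lra. }
case: he1 => he1; case: he2 => he2; rewrite {e1}he1 {e2}he2 in Pal Heq;
 move: Heq; rewrite /act /zc /solmul /d4act /mksol /solx /soly /solz /solu /= !mx2_00 !mx2_01 !mx2_10 !mx2_11 ?Abar_d ?oppr0 ?expR0;
 case => h1 h2 h3 h4.
- have ha4 : a4 = 0 by lra.
  rewrite ha4 oppr0 expR0 in h1 h2 h3.
  have ha1 : a1 = 0 by lra.
  have ha2 : a2 = 0 by lra.
  have ha3 : a3 = 1 / (2 * q) by rewrite ha1 in h3; lra.
  rewrite ha1 ha2 ha3 ha4 -mx2_1 in Pal.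
  have [k hk] := (hcenter (1 / (2 * q))).1 Pal.
  exfalso; exact: (half_int _ _ q0 hk).
- have ha4 : a4 = 0 by lra.
  rewrite ha4 oppr0 expR0 in h1 h2 h3.
  have ha1 : a1 = 0 by lra.
  have E : emul (a1,a2,a3,a4, mx2 1 0 0 (-1)) (a1,a2,a3,a4, mx2 1 0 0 (-1)) = eid R.
    expand; rewrite ha1 ha4; fin.
  have := tf_id Pi htf _ Pal E; rewrite /= mx2_1 => /mx2_eq [_ _ _]; lra.
- have ha4 : a4 = 0 by lra.
  rewrite ha4 oppr0 expR0 in h1 h2 h3.
  have ha2 : a2 = 0 by lra.
  have E : emul (a1,a2,a3,a4, mx2 (-1) 0 0 1) (a1,a2,a3,a4, mx2 (-1) 0 0 1) = eid R.
    expand; rewrite ha2 ha4; fin.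
  have := tf_id Pi htf _ Pal E; rewrite /= mx2_1 => /mx2_eq [? _ _]; lra.
- have ha4 : a4 = 0 by lra.
  rewrite ha4 oppr0 expR0 in h1 h2 h3.
  have ha1 : a1 = 2 * x by lra.
  have ha2 : a2 = 2 * y by lra.
  have ha3 : a3 = 1 / (2 * q) + 2 * x * y.
    by rewrite ha1 in h3; apply: (solve_lin _ _ _ _ h3); field.
  by rewrite ha1 ha2 ha3 ha4 in Pal.
Qed.

Lemma cont_ball (T U : pseudoMetricType R) (f : T -> U) :
  (forall x e y, 0 < e -> ball x e y -> ball (f x) e (f y)) -> continuous f.
Proof.
move=> H x; apply/cvg_ballP => e e0.
by apply: filterS (nbhsx_ballx x e e0) => y; apply: H.
Qed.

Lemma Qmul q x y x' y' : q != 0 ->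
  emul (Qel (1/(2*q)) x y) (Qel (1/(2*q)) x' y') =
  (mksol (2*(x - x')) (2*(y-y')) (1/q + 2*(x*y + x'*y' - 2*x*y')) 0, 1%:M).
Proof.
move=> q0.
rewrite /Qel /mI /emul /eid /= mx2_mul mx2_1 /solmul /d4act /sol1 /mksol /solx /soly /solz /solu /= !mx2_00 !mx2_01 !mx2_10 !mx2_11 Abar_d.
congr (_,_,_,_,_); rewrite ?oppr0 ?expR0.
all: first [ by ring | by field | by apply: mx2_congr; ring ].
Qed.

Lemma est (e px py gx gy : R) : 0 < e ->
  `|px - gx| < Num.min 1 (e / (4 * (`|px| + `|py| + 1))) ->
  `|py - gy| < Num.min 1 (e / (4 * (`|px| + `|py| + 1))) ->
  [/\ `|2*(px-gx)| < e, `|2*(py-gy)| < e & `|2*(px*py + gx*gy - 2*px*gy)| < e].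
Proof.
move=> e0; set K := `|px| + `|py| + 1; set d := Num.min 1 _.
have K1 : 1 <= K by rewrite /K lerDr addr_ge0.
have K0 : 0 < K by apply: lt_le_trans K1.
have K4 : 0 < 4 * K by rewrite mulr_gt0.
rewrite !lt_min !ltr_pdivlMr // => /andP[A1 HA] /andP[B1 HB].
have hw : px*py + gx*gy - 2*px*gy = (gx-px)*py - px*(gy-py) + (gx-px)*(gy-py) by ring.
have n2 : `|2 : R| = 2 by rewrite ger0_norm.
rewrite !normrM n2 hw.
set A := `|px - gx| in A1 HA *; set B := `|py - gy| in B1 HB *.
have A0 : 0 <= A by exact: normr_ge0. have B0 : 0 <= B by exact: normr_ge0.
have P0 : 0 <= `|px| by exact: normr_ge0. have Q0 : 0 <= `|py| by exact: normr_ge0.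
have eA : `|gx - px| = A by rewrite distrC.
have eB : `|gy - py| = B by rewrite distrC.
have tri : `|(gx-px)*py - px*(gy-py) + (gx-px)*(gy-py)| <= A * `|py| + `|px| * B + A * B.
  apply: (le_trans (ler_normD _ _)); rewrite [`|(gx - px) * (gy - py)|]normrM eA eB.
  apply: lerD => //; apply: (le_trans (ler_normB _ _)); by rewrite !normrM eA eB.
rewrite /K in HA HB.
split; [nra | nra | nra].
Qed.

End S.

Theorem corollary8p3 (R : realType) (Pi : set (elem R))
  (hsub : is_subgroup Pi) (hdisc : is_discrete Pi)
  (hcoc : is_cocompact Pi) (htf : is_torsion_free Pi)
  (q : R) (hq : 0 < q)
  (hcenter : forall t : R, Pi (zc t, 1%:M) <-> exists k : int, t = k%:~R / q) :
  let s := zc (1 / (2 * q)) in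
  lifted_fix Pi s = set0 \/ is_2manifold (lifted_fix Pi s).
Proof.
move=> s; right.
have q0 : q != 0 by rewrite gt_eqF.
have Pal0 : Pi (zc (1/q), 1%:M) by apply/hcenter; exists 1; rewrite mulr1z.
have [U0 [oU0 [U0c HU0]]] := hdisc _ Pal0.
have /nbhs_ex [d Hd] : nbhs (zc (1/q) : sol R) U0 by apply: open_nbhs_nbhs; split.
have e0 : 0 < d%:num by [].
have [_ [_ [hmul _]]] := hsub.
move=> [[[px py] pz] pu] Fp.
have Qp := @char R Pi hsub htf q hq hcenter _ Fp.
set dl := Num.min 1 (d%:num / (4 * (`|px| + `|py| + 1))).
have d0 : 0 < dl.
  rewrite lt_min ltr01 /= divr_gt0 // mulr_gt0 // ltr_pwDr // addr_ge0 //.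
exists [set g : sol R | ball (px, py) dl g.1.1].
have c11 : continuous (fun g : sol R => g.1.1).
  by apply: (@cont_ball R) => x e y _ [[H _] _].
split.
  apply: open_comp; last exact: ball_open.
  by move=> g _; apply: c11.
split; first exact: ballxx.
exists (fun v : R * R => mksol px py v.1 v.2), (fun g : sol R => (g.1.2, g.2)).
split.
  apply: (@cont_ball R) => v e w e1 [H1 H2].
  by split; [split; [split; exact: ballxx | exact: H1] | exact: H2].
split.
  apply: continuous_subspaceT; apply: (@cont_ball R) => x e y _ [[_ H1] H2]; by split.
split.
  move=> v; split; first exact: ballxx.
  exists (Qel R (1 / (2 * q)) px py); split; first exact: Qp.
  exact: (@act_Q R).
split; first by case.
move=> [[[gx gy] gz] gu] [[Ux Uy] Fg] /=.
have Qg := @char R Pi hsub htf q hq hcenter _ Fg.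
have Pm := hmul _ _ Qp Qg; rewrite (@Qmul R) // in Pm.
have [h1 h2 h3] := @est R (d%:num) px py gx gy e0 Ux Uy.
have Um : U0 (mksol (2*(px - gx)) (2*(py-gy)) (1/q + 2*(px*py + gx*gy - 2*px*gy)) 0).
  apply: Hd; rewrite /zc /mksol.
  split; [split; [split|] |]; rewrite /ball /= ?subrr ?sub0r ?normrN ?normr0 //.
  by rewrite opprD addrA subrr sub0r normrN.
have := HU0 _ Pm erefl Um; rewrite /zc /mksol => -[hx hy] _.
move: hx hy; rewrite /solx /soly /= => hx hy.
have -> : gx = px by lra.
have -> : gy = py by lra.
by [].
Qed.
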